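(* Let $U\in\mathbb{R}^{n\times d}$, let $\mathbf{x}_*\in\mathbb{R}^d$ be $s$-sparse and $\mathbf{y}=U\mathbf{x}_*$ (noiseless). Let $\mathbf{x}_t$ be an iterate of Algorithm 1 with support $\mathcal{S}_t$, and $\mathcal{S}_*$ the support of $\mathbf{x}_*$. If $|\mathcal{S}_t\setminus\mathcal{S}_*|\le s$, $\|\mathbf{x}_t-\mathbf{x}_*\|_2\le\Delta_t$ and $\lambda_t=\frac{\delta_s+\sqrt2\theta_{s,s}}{\sqrt s}\Delta_t$, then \[ \|\mathbf{x}_{t+1}-\mathbf{x}_*\|_2\le(\delta_s+\sqrt2\theta_{s,s}+\delta_{3s})\Delta_t . \]
   Context: $U_{\mathcal T}$ is the column submatrix of $U$ indexed by $\mathcal T$. $\delta_k$ is the smallest constant $\ge0$ with $(1-\delta_k)\|\mathbf{v}\|_2^2\le\|U_{\mathcal T}\mathbf{v}\|_2^2\le(1+\delta_k)\|\mathbf{v}\|_2^2$ for all $|\mathcal T|\le k$, $\mathbf{v}\in\mathbb{R}^{|\mathcal T|}$; $\theta_{s,s}$ (with $2s\le d$) is the smallest constant with $|\langle U_{\mathcal T}\mathbf{v},U_{\mathcal T'}\mathbf{v}'\rangle|\le\theta_{s,s}\|\mathbf{v}\|_2\|\mathbf{v}'\|_2$ for all disjoint $\mathcal T,\mathcal T'$ of size at most $s$. Algorithm 1: $\mathbf{x}_1=0$ and $\mathbf{x}_{t+1}=\mathrm{sign}(\widehat{\mathbf{x}}_t)[|\widehat{\mathbf{x}}_t|-\lambda_t]_+$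 with $\widehat{\mathbf{x}}_t=\mathbf{x}_t-U^\top(U\mathbf{x}_t-\mathbf{y})$ (componentwise), for parameters $\lambda_t>0$. *)

(* Defs.v *)
From mathcomp Require Import all_boot all_order all_algebra.
Set Implicit Arguments. Unset Strict Implicit. Unset Printing Implicit Defensive.
Import Order.TTheory GRing.Theory Num.Theory.
Local Open Scope ring_scope.

Section Defs.
Variable R : rcfType.

Definition dotv (m : nat) (u v : 'cV[R]_m) : R := \sum_(i < m) u i 0 * v i 0.
Definition norm2 (m : nat) (v : 'cV[R]_m) : R := Num.sqrt (dotv v v).

Definition supp (m : nat) (v : 'cV[R]_m) : {set 'I_m} := [set i | v i 0 != 0].

(* U_T : column submatrix of U indexed by T (columns in increasing order) *)
Definition colsubT (n d : nat) (U : 'M[R]_(n, d)) (T : {set 'I_d}) : 'M[R]_(n, #|T|) :=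
  colsub (@enum_val _ (mem T)) U.

Definition rip_ok (n d : nat) (U : 'M[R]_(n, d)) (k : nat) (delta : R) : Prop :=
  0 <= delta /\
  forall T : {set 'I_d}, (#|T| <= k)%N -> forall v : 'cV[R]_#|T|,
    (1 - delta) * norm2 v ^+ 2 <= norm2 (colsubT U T *m v) ^+ 2 /\
    norm2 (colsubT U T *m v) ^+ 2 <= (1 + delta) * norm2 v ^+ 2.

Definition is_rip_const (n d : nat) (U : 'M[R]_(n, d)) (k : nat) (delta : R) : Prop :=
  rip_ok U k delta /\ forall delta', rip_ok U k delta' -> delta <= delta'.

Definition roc_ok (n d : nat) (U : 'M[R]_(n, d)) (s : nat) (theta : R) : Prop :=
  forall T T' : {set 'I_d}, (#|T| <= s)%N -> (#|T'| <= s)%N -> [disjoint T & T'] ->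
    forall (v : 'cV[R]_#|T|) (v' : 'cV[R]_#|T'|),
      `|dotv (colsubT U T *m v) (colsubT U T' *m v')| <= theta * norm2 v * norm2 v'.

Definition is_roc_const (n d : nat) (U : 'M[R]_(n, d)) (s : nat) (theta : R) : Prop :=
  roc_ok U s theta /\ forall theta', roc_ok U s theta' -> theta <= theta'.

Definition ista_step (n d : nat) (U : 'M[R]_(n, d)) (y : 'cV[R]_n) (lam : R)
    (x : 'cV[R]_d) : 'cV[R]_d :=
  let xh := x - U^T *m (U *m x - y) in
  \col_i (Num.sg (xh i 0) * Num.max (`|xh i 0| - lam) 0).

Fixpoint ista_aux (n d : nat) (U : 'M[R]_(n, d)) (y : 'cV[R]_n) (lam : nat -> R)
    (k : nat) : 'cV[R]_d :=
  match k with
  | O => 0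
  | S k' => ista_step U y (lam k) (ista_aux U y lam k')
  end.

(* iterates of Algorithm 1, indexed from 1: x_1 = 0, x_{t+1} = step(lambda_t, x_t) *)
Definition ista (n d : nat) (U : 'M[R]_(n, d)) (y : 'cV[R]_n) (lam : nat -> R)
    (t : nat) : 'cV[R]_d := ista_aux U y lam t.-1.

End Defs.

(* Main.v *)
Require Import Defs.
From mathcomp Require Import all_boot all_order all_algebra.
From mathcomp Require Import ring lra zify.
Set Implicit Arguments. Unset Strict Implicit. Unset Printing Implicit Defensive.
Import Order.TTheory GRing.Theory Num.Theory.
Local Open Scope ring_scope.

Section Aux.
Variable R : rcfType.

Lemma dotvC m (u v : 'cV[R]_m) : dotv u v = dotv v u.
Proof. by rewrite /dotv; apply: eq_bigr => i _; rewrite mulrC. Qed.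

Lemma dotvDl m (u v w : 'cV[R]_m) : dotv (u + v) w = dotv u w + dotv v w.
Proof. by rewrite /dotv -big_split; apply: eq_bigr => i _; rewrite mxE mulrDl. Qed.

Lemma dotvDr m (u v w : 'cV[R]_m) : dotv w (u + v) = dotv w u + dotv w v.
Proof. by rewrite dotvC dotvDl !(dotvC w). Qed.

Lemma dotvZl m (k : R) (u v : 'cV[R]_m) : dotv (k *: u) v = k * dotv u v.
Proof. by rewrite /dotv mulr_sumr; apply: eq_bigr => i _; rewrite mxE mulrA. Qed.

Lemma dotvZr m (k : R) (u v : 'cV[R]_m) : dotv v (k *: u) = k * dotv v u.
Proof. by rewrite dotvC dotvZl dotvC. Qed.

Lemma dotvNl m (u v : 'cV[R]_m) : dotv (- u) v = - dotv u v.
Proof. by rewrite -scaleN1r dotvZl mulN1r. Qed.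

Lemma dotvNr m (u v : 'cV[R]_m) : dotv v (- u) = - dotv v u.
Proof. by rewrite dotvC dotvNl dotvC. Qed.

Lemma dotv_ge0 m (u : 'cV[R]_m) : 0 <= dotv u u.
Proof. by rewrite /dotv sumr_ge0 // => i _; rewrite -expr2 sqr_ge0. Qed.

Lemma norm2_ge0 m (u : 'cV[R]_m) : 0 <= norm2 u.
Proof. exact: sqrtr_ge0. Qed.

Lemma norm2_sq m (u : 'cV[R]_m) : norm2 u ^+ 2 = dotv u u.
Proof. by rewrite /norm2 sqr_sqrtr // dotv_ge0. Qed.

Lemma dotv_adj n d (U : 'M[R]_(n, d)) (a : 'cV[R]_d) (b : 'cV[R]_n) :
  dotv (U *m a) b = dotv a (U^T *m b).
Proof.
rewrite /dotv.
under eq_bigr do rewrite mxE big_distrl /=.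
rewrite exchange_big /=; apply: eq_bigr => j _.
rewrite mxE big_distrr /=; apply: eq_bigr => i _.
by rewrite mxE; ring.
Qed.

Lemma dotv0 m (u v : 'cV[R]_m) : dotv u u = 0 -> dotv u v = 0.
Proof.
move=> H; rewrite /dotv big1 // => i _.
have Hi : u i 0 * u i 0 = 0.
  apply: (@psumr_eq0P R _ predT (fun i => u i 0 * u i 0) _ H) => //.
  by move=> j _; rewrite -expr2 sqr_ge0.
move/eqP: Hi.
by rewrite mulf_eq0 orbb => /eqP ->; rewrite mul0r.
Qed.

Lemma CS m (u v : 'cV[R]_m) : dotv u v <= norm2 u * norm2 v.
Proof.
set A := norm2 u; set B := norm2 v.
have A0 : 0 <= A by apply: norm2_ge0.
have B0 : 0 <= B by apply: norm2_ge0.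
have HA : dotv u u = A ^+ 2 by rewrite norm2_sq.
have HB : dotv v v = B ^+ 2 by rewrite norm2_sq.
have key : dotv u v * (2 * A * B) <= dotv u u * B ^+ 2 + dotv v v * A ^+ 2.
  rewrite /dotv !mulr_suml -big_split /= ler_sum // => i _.
  have := sqr_ge0 (u i 0 * B - v i 0 * A); nra.
rewrite HA HB in key.
have [A00|Ap] := eqVneq A 0.
  rewrite A00 mul0r dotv0 // HA A00; ring.
have [B00|Bp] := eqVneq B 0.
  rewrite B00 mulr0 dotvC dotv0 // HB B00; ring.
have Ap' : 0 < A by rewrite lt_def Ap.
have Bp' : 0 < B by rewrite lt_def Bp.
have AB : 0 < A * B by apply: mulr_gt0.
nra.
Qed.

Definition supported d (W : {set 'I_d}) (g : 'cV[R]_d) := forall i, i \notin W -> g i 0 = 0.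

Definition restr d (W : {set 'I_d}) (g : 'cV[R]_d) : 'cV[R]_#|W| :=
  \col_k g (enum_val k) 0.

Lemma restr_mul n d (U : 'M[R]_(n, d)) W g : supported W g ->
  colsubT U W *m restr W g = U *m g.
Proof.
move=> Hg; apply/matrixP => i j; rewrite (ord1 j) !mxE.
rewrite (bigID (mem W)) /= [X in _ = _ + X]big1 ?addr0; last first.
  by move=> k Hk; rewrite (Hg k Hk) mulr0.
rewrite [RHS]big_enum_val; apply: eq_bigr => k _; by rewrite !mxE.
Qed.

Lemma restr_dot d (W : {set 'I_d}) g g' : supported W g ->
  dotv (restr W g) (restr W g') = dotv g g'.
Proof.
move=> Hg; rewrite /dotv [in RHS](bigID (mem W)) /= [X in _ = _ + X]big1 ?addr0; last first.
  by move=> k Hk; rewrite (Hg k Hk) mul0r.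
rewrite [RHS]big_enum_val; apply: eq_bigr => k _; by rewrite !mxE.
Qed.

Lemma restr_norm d (W : {set 'I_d}) g : supported W g ->
  norm2 (restr W g) = norm2 g.
Proof. by move=> H; rewrite /norm2 restr_dot. Qed.

Lemma rip_full n d (U : 'M[R]_(n, d)) k delta (W : {set 'I_d}) (g : 'cV[R]_d) :
  rip_ok U k delta -> (#|W| <= k)%N -> supported W g ->
  (1 - delta) * dotv g g <= dotv (U *m g) (U *m g) /\
  dotv (U *m g) (U *m g) <= (1 + delta) * dotv g g.
Proof.
move=> [_ H] HW Hg; have [H1 H2] := H W HW (restr W g).
by rewrite restr_mul // restr_norm // !norm2_sq in H1 H2.
Qed.

Lemma roc_full n d (U : 'M[R]_(n, d)) s theta (T T' : {set 'I_d}) (g g' : 'cV[R]_d) :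
  roc_ok U s theta -> (#|T| <= s)%N -> (#|T'| <= s)%N -> [disjoint T & T'] ->
  supported T g -> supported T' g' ->
  `|dotv (U *m g) (U *m g')| <= theta * norm2 g * norm2 g'.
Proof.
move=> H HT HT' Hd Hg Hg'.
have := H T T' HT HT' Hd (restr T g) (restr T' g').
by rewrite !restr_mul // !restr_norm.
Qed.


Lemma soft_facts (lam z : R) : 0 <= lam ->
  `|Num.sg z * Num.max (`|z| - lam) 0 - z| <= lam /\
  `|Num.sg z * Num.max (`|z| - lam) 0| <= `|z| /\
  (`|z| <= lam -> Num.sg z * Num.max (`|z| - lam) 0 = 0).
Proof.
move=> l0; rewrite maxEle.
case: (ltrgtP z 0) => hz.
- rewrite ltr0_sg // (ltr0_norm hz).
  case: ifP => H; rewrite !ler_norml; (split; [|split]);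
    try (apply/andP; split); try move=> ?; try (move/negbT: H => H); lra.
- rewrite gtr0_sg // (gtr0_norm hz).
  case: ifP => H; rewrite !ler_norml; (split; [|split]);
    try (apply/andP; split); try move=> ?; try (move/negbT: H => H); lra.
- by rewrite hz sgr0 !mul0r normr0 subr0 normr0.
Qed.


Lemma suppD d (W : {set 'I_d}) x y : supported W x -> supported W y -> supported W (x + y).
Proof. by move=> Hx Hy i Hi; rewrite mxE Hx // Hy // addr0. Qed.
Lemma suppN d (W : {set 'I_d}) x : supported W x -> supported W (- x).
Proof. by move=> Hx i Hi; rewrite mxE Hx // oppr0. Qed.
Lemma suppZ d (W : {set 'I_d}) k x : supported W x -> supported W (k *: x).
Proof. by move=> Hx i Hi; rewrite mxE Hx // mulr0. Qed.

Lemma polar n d (U : 'M[R]_(n, d)) k delta (W : {set 'I_d}) (x y : 'cV[R]_d) :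
  rip_ok U k delta -> (#|W| <= k)%N -> supported W x -> supported W y ->
  4 * (dotv (U *m x) (U *m y) - dotv x y) <= 2 * delta * (dotv x x + dotv y y).
Proof.
move=> H HW Hx Hy.
have [_ H1] := rip_full H HW (suppD Hx Hy).
have [H2 _] := rip_full H HW (suppD Hx (suppN Hy)).
move: H1 H2; rewrite !mulmxDr !mulmxN !(dotvDl, dotvDr, dotvNl, dotvNr).
rewrite (dotvC y x) (dotvC (U *m y) (U *m x)).
move=> H1 H2; nra.
Qed.

Definition proj d (W : {set 'I_d}) (g : 'cV[R]_d) : 'cV[R]_d :=
  \col_i (if i \in W then g i 0 else 0).

Lemma supp_proj d (W : {set 'I_d}) g : supported W (proj W g).
Proof. by move=> i Hi; rewrite mxE (negbTE Hi). Qed.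

Lemma dot_proj d (W : {set 'I_d}) g g' : dotv (proj W g) g' = dotv (proj W g) (proj W g').
Proof.
rewrite /dotv; apply: eq_bigr => i _; rewrite !mxE; by case: (i \in W); rewrite ?mul0r.
Qed.

Lemma rip_op n d (U : 'M[R]_(n, d)) k delta (W : {set 'I_d}) (h : 'cV[R]_d) :
  rip_ok U k delta -> (#|W| <= k)%N -> supported W h ->
  norm2 (proj W (h - U^T *m (U *m h))) <= delta * norm2 h.
Proof.
move=> H HW Hh.
set eW := proj W _.
have d0 : 0 <= delta by case: H.
set a := norm2 h; set c := norm2 eW.
have a0 : 0 <= a by apply: norm2_ge0.
have c0 : 0 <= c by apply: norm2_ge0.
have Q : dotv (U *m h) (U *m eW) - dotv h eW = - c ^+ 2.
  rewrite norm2_sq dotvC dotv_adj /eW (dotvC h) -[X in _ = - X]dot_proj.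
  by rewrite dotvDr dotvNr; ring.
have P := polar H HW (@suppZ d W c h Hh) (@suppZ d W (- a) eW (@supp_proj d W _)).
move: P; rewrite -!scalemxAr !(dotvZl, dotvZr) -!norm2_sq -/a.
rewrite (_ : dotv (U *m h) (U *m eW) = dotv h eW - c ^+ 2); last by rewrite -Q; ring.
move=> P.
have [->|cn] := eqVneq c 0; first by rewrite mulr_ge0.
have [a00|an] := eqVneq a 0.
  exfalso; move: Q.
  have [_ Hu] := rip_full H HW Hh.
  rewrite -[dotv h h]norm2_sq -/a a00 expr0n /= mulr0 in Hu.
  have Uh0 : dotv (U *m h) (U *m h) = 0 by apply/eqP; rewrite eq_le Hu dotv_ge0.
  have h0 : dotv h h = 0 by rewrite -norm2_sq -/a a00 expr0n.
  rewrite (dotv0 _ Uh0) (dotv0 _ h0) subrr => /eqP; rewrite eq_sym oppr_eq0.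
  by rewrite expf_eq0 /= (negbTE cn).
have ap : 0 < a by rewrite lt_def an.
have cp : 0 < c by rewrite lt_def cn.
have acc : 0 < a * c ^+ 2 by rewrite mulr_gt0 // exprn_gt0.
rewrite -/c in P.
have E : (a * c ^+ 2) * (c - delta * a) <= 0 by nra.
by rewrite pmulr_rle0 // subr_le0 in E.
Qed.


Lemma le_norm2 m (u : 'cV[R]_m) (b : R) : 0 <= b -> dotv u u <= b ^+ 2 -> norm2 u <= b.
Proof.
move=> b0 H; rewrite /norm2 -(ger0_norm b0) -sqrtr_sqr.
by rewrite ler_sqrt // sqr_ge0.
Qed.

Lemma dot_projE d (W : {set 'I_d}) g :
  dotv (proj W g) (proj W g) = \sum_(i in W) g i 0 ^+ 2.
Proof.
rewrite /dotv [RHS]big_mkcond /=; apply: eq_bigr => i _; rewrite !mxE.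
by case: (i \in W); rewrite ?mul0r ?expr2.
Qed.

Lemma sq_le (a b : R) : 0 <= b -> a ^+ 2 <= b ^+ 2 -> a <= b.
Proof. move=> b0 H; case: (lerP a b) => // Hba; nra. Qed.

End Aux.

Theorem proposition2 (R : rcfType) (n d s : nat) (U : 'M[R]_(n, d))
    (xs : 'cV[R]_d) (lam : nat -> R) (t : nat)
    (Delta delta_s delta_3s theta_ss : R) :
  (0 < s)%N -> (2 * s <= d)%N ->
  (#|supp xs| <= s)%N ->
  (forall k, 0 < lam k) ->
  is_rip_const U s delta_s ->
  is_rip_const U (3 * s) delta_3s ->
  is_roc_const U s theta_ss ->
  (0 < t)%N ->
  (#|supp (ista U (U *m xs) lam t) :\: supp xs| <= s)%N ->
  norm2 (ista U (U *m xs) lam t - xs) <= Delta ->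
  lam t = (delta_s + Num.sqrt 2 * theta_ss) / Num.sqrt (s%:R) * Delta ->
  norm2 (ista U (U *m xs) lam t.+1 - xs) <= (delta_s + Num.sqrt 2 * theta_ss + delta_3s) * Delta.
Proof.
move=> s0 _ HS lam0 [Hrs _] [Hr3 _] [Hroc _] t0 HA HD Hlam.
have Ex : ista U (U *m xs) lam t.+1 = ista_step U (U *m xs) (lam t) (ista U (U *m xs) lam t).
  by case: t t0 {HA HD Hlam}.
rewrite Ex; move: HA HD Hlam; set x := ista U (U *m xs) lam t.
have l0 := lam0 t; move: l0; set l := lam t.
move=> l0 HA HD Hl.
set K := delta_s + Num.sqrt 2 * theta_ss.
have ds0 : 0 <= delta_s by case: Hrs.
have d30 : 0 <= delta_3s by case: Hr3.
have D0 : 0 <= Delta by apply: le_trans HD; apply: norm2_ge0.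
have sqs : 0 < Num.sqrt (s%:R : R) by rewrite sqrtr_gt0 ltr0n.
have Hsl : Num.sqrt (s%:R) * l = K * Delta.
  by rewrite Hl mulrA mulrCA divff ?mulr1 // gt_eqF.
have Hsl2 : s%:R * l ^+ 2 = (K * Delta) ^+ 2.
  by rewrite -Hsl exprMn sqr_sqrtr // ler0n.
set S := supp xs; set A := supp x :\: S.
set h := x - xs; set w := U^T *m (U *m h); set e := h - w.
have inS i : (i \in S) = (xs i 0 != 0) by rewrite inE.
have inA i : (i \in A) = (i \notin S) && (x i 0 != 0) by rewrite !inE.
have F1 : supported (S :|: A) h.
  move=> i; rewrite in_setU negb_or inS inA => /andP[/negPn/eqP H1].
  rewrite inS H1 eqxx /= => /negPn/eqP H2; by rewrite /h !mxE H1 H2 subrr.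
have SAd : [disjoint S & A].
  by rewrite disjoint_subset; apply/subsetP => i; rewrite !inE => ->.
set T' := [set i | (i \notin S) && (i \notin A) && (l < `|e i 0|)].
set pS := proj S h; set pA := proj A h.
have hdec : h = pS + pA.
  apply/matrixP => i j; rewrite (ord1 j) [RHS]mxE /pS /pA !mxE.
  case: (boolP (i \in S)) => iS.
    have : i \notin A by rewrite inA iS.
    by move/negbTE->; rewrite addr0.
  case: (boolP (i \in A)) => iA; rewrite ?add0r //.
  by have := F1 i; rewrite in_setU negb_or iS iA /h !mxE => ->.
have Nh : dotv h h = dotv pS pS + dotv pA pA.
  rewrite {1 2}hdec dotvDl !dotvDr (dotvC pA pS) (_ : dotv pS pA = 0); first ring.
  rewrite /dotv big1 // => i _; rewrite !mxE; case: (boolP (i \in S)) => iS; last by rewrite mul0r.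
  by rewrite (negbTE (_ : i \notin A)) ?mulr0 // inA iS.
have HT' : (#|T'| < s)%N.
  rewrite ltnNge; apply/negP => /card_geqP [sq [usq ssq subq]].
  set T := [set i in sq].
  have cT : #|T| = s by rewrite cardsE -ssq; apply/card_uniqP.
  have TT' i : i \in T -> i \in T' by rewrite inE; apply: subq.
  set v := proj T w.
  have Nv : dotv v v = dotv (U *m v) (U *m pS) + dotv (U *m v) (U *m pA).
    by rewrite -dotvDr -mulmxDr -hdec dotv_adj -/w [RHS]dot_proj.
  have dTS : [disjoint T & S].
    rewrite disjoint_subset; apply/subsetP => i /TT'; rewrite !inE /=.
    by case/andP => /andP[].
  have dTA : [disjoint T & A].
    rewrite disjoint_subset; apply/subsetP => i /TT'; rewrite !inE /=.
    by case/andP => /andP[].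
  have cTs : (#|T| <= s)%N by rewrite cT.
  have R1 := roc_full Hroc cTs HS dTS (@supp_proj _ _ T w) (@supp_proj _ _ S h).
  have R2 := roc_full Hroc cTs HA dTA (@supp_proj _ _ T w) (@supp_proj _ _ A h).
  have Nvl : s%:R * l ^+ 2 < dotv v v.
    rewrite /v dot_projE.
    have : \sum_(i in T) l ^+ 2 < \sum_(i in T) w i 0 ^+ 2.
      apply: ltr_sum.
        have /card_gt0P [i0 i0T] : (0 < #|T|)%N by rewrite cT.
        by apply/hasP; exists i0; rewrite ?mem_index_enum.
      move=> i iT; have := TT' i iT; rewrite inE => /andP[/andP[iS iA] le].
      have hi : h i 0 = 0 by apply: F1; rewrite in_setU negb_or iS iA.
      move: le; rewrite /e mxE hi mxE add0r normrN -(real_normK (num_real (w i 0))).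
      move=> le.
      have := normr_ge0 (w i 0); nra.
    by rewrite sumr_const cT mulr_natl.
  rewrite -/v -/pS -/pA in R1 R2.
  have e1 := ler_norm (dotv (U *m v) (U *m pS)).
  have e2 := ler_norm (dotv (U *m v) (U *m pA)).
  have p0 := norm2_ge0 pS; have q0 := norm2_ge0 pA; have a0 := norm2_ge0 h.
  have nv0 := norm2_ge0 v.
  rewrite -!norm2_sq in Nh Nv Nvl.
  move: Nh Nv Nvl R1 R2 e1 e2 p0 q0 a0 nv0.
  set nv := norm2 v; set p := norm2 pS; set q := norm2 pA; set a := norm2 h.
  move=> Nh Nv Nvl R1 R2 e1 e2 p0 q0 a0 nv0.
  have r20 := sqrtr_ge0 (2 : R).
  have r22 : Num.sqrt (2 : R) ^+ 2 = 2 by rewrite sqr_sqrtr.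
  have pq : p + q <= Num.sqrt 2 * a.
    apply: sq_le; first by rewrite mulr_ge0.
    rewrite exprMn r22 Nh; have := sqr_ge0 (p - q); nra.
  have KD0 : 0 <= (K * Delta) ^+ 2 by apply: sqr_ge0.
  rewrite Hsl2 in Nvl.
  have nvp : 0 < nv by nra.
  have nvle : nv <= theta_ss * (p + q) by nra.
  have th0 : 0 < theta_ss by nra.
  have aD : a <= Delta by [].
  have s1 : theta_ss * (p + q) <= theta_ss * (Num.sqrt 2 * Delta).
    apply: ler_wpM2l; first exact: ltW.
    apply: (le_trans pq); apply: ler_wpM2l => //.
  have s3 : 0 <= delta_s * Delta by apply: mulr_ge0.
  have : nv <= K * Delta.
    rewrite /K; lra.
  nra.
set W := S :|: A :|: T'.
have cW : (#|W| <= 3 * s)%N.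
  have HS' : (#|S| <= s)%N := HS. have HA' : (#|A| <= s)%N := HA.
  rewrite /W; have := cardsUI (S :|: A) T'; have := cardsUI S A; lia.
have suppW : supported W h.
  move=> i; rewrite in_setU negb_or => /andP[H _]; exact: F1.
have Hop := rip_op Hr3 cW suppW; rewrite -/w -/e in Hop.
set pe := proj W e in Hop.
have hatx : x - U^T *m (U *m x - U *m xs) = xs + e.
  rewrite -mulmxBr -/h -/w /e /h; apply/matrixP => i j; rewrite !mxE; ring.
have Estep : ista_step U (U *m xs) l x =
    \col_i (Num.sg ((xs + e) i 0) * Num.max (`|(xs + e) i 0| - l) 0).
  by rewrite /ista_step hatx.
rewrite Estep.
set r := (\col_i _) - xs.
set b : 'cV[R]_d := \col_i (if i \in S then l else 0).
have xsS i : i \notin S -> xs i 0 = 0 by rewrite inS => /negPn/eqP.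
clearbody e.
have coord i : `|r i 0| <= `|pe i 0| + b i 0.
  rewrite /r /b /pe !mxE.
  case: (boolP (i \in S)) => iS.
    have [H1 _] := soft_facts (xs i 0 + e i 0) (ltW l0).
    have iW : i \in W by rewrite !in_setU iS.
    rewrite iW.
    set f := _ * _ in H1 *.
    rewrite (_ : f - xs i 0 = (f - (xs i 0 + e i 0)) + e i 0); last by ring.
    apply: le_trans (ler_normD _ _) _; lra.
  rewrite xsS // !add0r subr0 addr0.
  have [_ [H2 H3]] := soft_facts (e i 0) (ltW l0).
  case: (boolP (i \in W)) => iW //.
  rewrite H3 ?normr0 //.
  move: iW; rewrite !in_setU !negb_or => /andP[/andP[_ iA] iT].
  by move: iT; rewrite inE iS iA /= -leNgt.
set u : 'cV[R]_d := \col_i `|pe i 0|.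
have Nr : dotv r r <= dotv (u + b) (u + b).
  rewrite /dotv; apply: ler_sum => i _.
  have c := coord i; have r0 := normr_ge0 (r i 0).
  have p0 := normr_ge0 (pe i 0).
  have b0 : 0 <= b i 0 by rewrite /b mxE; case: ifP => // _; apply: ltW.
  have -> : (u + b) i 0 = `|pe i 0| + b i 0 by rewrite [LHS]mxE /u mxE.
  move: c r0 p0 b0; move: (b i 0) (`|pe i 0|) => bi pi.
  rewrite -!expr2 -(real_normK (num_real (r i 0))).
  move: (`|r i 0|) => ri; nra.
have Nu : dotv u u = dotv pe pe.
  rewrite /dotv; apply: eq_bigr => i _; rewrite mxE -!expr2.
  exact: (real_normK (num_real _)).
have Nb : dotv b b <= (K * Delta) ^+ 2.
  rewrite -Hsl2 (_ : dotv b b = l ^+ 2 *+ #|S|).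
    rewrite -mulr_natl ler_wpM2r ?sqr_ge0 // ler_nat; exact: HS.
  rewrite -sumr_const /dotv [RHS]big_mkcond /=; apply: eq_bigr => i _.
  by rewrite mxE; case: ifP; rewrite ?mul0r ?expr2.
have KD : 0 <= K * Delta by rewrite -Hsl; apply: mulr_ge0; [apply: ltW | apply: ltW].
have nb := le_norm2 KD Nb.
have nu : norm2 u <= delta_3s * Delta.
  rewrite /norm2 Nu -/(norm2 pe); apply: (le_trans Hop); apply: ler_wpM2l => //.
have cs := CS u b.
have nu0 := norm2_ge0 u; have nb0 := norm2_ge0 b.
apply: le_norm2; first by rewrite mulrDl addr_ge0 // mulr_ge0.
apply: (le_trans Nr).
rewrite dotvDl !dotvDr (dotvC b u) -!norm2_sq.
rewrite -!norm2_sq in Nu.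
nra.
Qed.
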